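(* Let $V$ be a finite family of L-frames all anchored at $D$ from above, $G$ its intersection graph, and $\mathcal B,\mathcal R\subseteq V$ disjoint dominating sets of $G$. Let $H=(\mathcal B\cup\mathcal R,E')$ be the bipartite graph and its drawing defined in the context. Then in this drawing no two arcs cross except at common endpoints: no two top arcs cross, no two down arcs cross, no mixed arc crosses a top arc, no mixed arc crosses a down arc, and no two mixed arcs cross. In particular $H$ is planar.
   Context: Fix a line $D$ of slope $-1$. An L-frame is the union of a closed horizontal segment and a closed vertical segment sharing an endpoint, its corner $\mathrm{cor}(\cdot)$. An L-frame is anchored at $D$ from above if its corner is on $D$, its horizontal segment goes right from the corner and its vertical segment goes up. For intersecting L-frames $L_1,L_2$ anchored from above, $L_1$ intersects $L_2$ from the left if $x(\mathrm{cor}(L_1))\le x(\mathrm{cor}(L_2))$, and from below if $x(\mathrm{cor}(L_1))\ge x(\mathrm{cor}(L_2))$. Definition of $H$: for each $u\in V$, among all pairs $(b,r)\in\mathcal B\times\mathcal R$ such that both $b$ and $r$ intersect $u$ (an L-frame intersects itself), choose one pair minimizing the Euclidean distance $\mathrm{dist}(\mathrm{cor}(b),\mathrm{cor}(r))$ and put $(b,r)$ in $E'$; $u$ is called a witness of $(b,r)$. An arc $(b,r)\in E'$ is a top arc if it has a witness $u$ that both $b$ and $r$ intersect from the left (fix such $u$ as $w(b,r)$); otherwise it is a down arc if it has a witness $v$ that both $b$ and $r$ intersect from below (fix such $v$ as $w(b,r)$); otherwise it is a mixed arc, and $w(b,r)$ is any witness (which $b$ and $r$ intersect from different sides). Drawing: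 vertex $u$ is placed at $\mathrm{cor}(u)\in D$. For an arc $(p,q)$ with $x(\mathrm{cor}(p))<x(\mathrm{cor}(q))$: a top (resp. down) arc is drawn as the half of the circle with diameter segment $\mathrm{cor}(p)\mathrm{cor}(q)$ lying above (resp. below) $D$. For a mixed arc, where $p$ intersects $w=w(p,q)$ from the left and $q$ intersects $w$ from below (so $x(\mathrm{cor}(p))<x(\mathrm{cor}(w))<x(\mathrm{cor}(q))$), it is drawn as the half of the circle with diameter $\mathrm{cor}(p)\mathrm{cor}(w)$ above $D$ followed by the half of the circle with diameter $\mathrm{cor}(w)\mathrm{cor}(q)$ below $D$. *)

(* Defs.v *)
From Stdlib Require Import Reals Lra List.
Open Scope R_scope.

Definition point := (R * R)%type.

Definition onD (c : R) (p : point) : Prop := fst p + snd p = c.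

(* An L-frame is given by its corner (cx,cy), the x-coordinate [hend] of the
   other endpoint of its horizontal segment (at height cy), and the
   y-coordinate [vend] of the other endpoint of its vertical segment
   (at abscissa cx). *)
Record Lframe := mkLframe { cx : R; cy : R; hend : R; vend : R }.

Definition cor (L : Lframe) : point := (cx L, cy L).

Definition onFrame (L : Lframe) (p : point) : Prop :=
  (snd p = cy L /\ Rmin (cx L) (hend L) <= fst p <= Rmax (cx L) (hend L)) \/
  (fst p = cx L /\ Rmin (cy L) (vend L) <= snd p <= Rmax (cy L) (vend L)).

Definition anchored_above (c : R) (L : Lframe) : Prop :=
  onD c (cor L) /\ cx L < hend L /\ cy L < vend L.

Definition intersects (L1 L2 : Lframe) : Prop :=
  exists p, onFrame L1 p /\ onFrame L2 p.

Definition int_from_left (L1 L2 : Lframe) : Prop :=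
  intersects L1 L2 /\ cx L1 <= cx L2.

Definition int_from_below (L1 L2 : Lframe) : Prop :=
  intersects L1 L2 /\ cx L1 >= cx L2.

Definition dist (p q : point) : R :=
  sqrt ((fst p - fst q)^2 + (snd p - snd q)^2).

Definition G_adj {I : Type} (F : I -> Lframe) (u v : I) : Prop :=
  u <> v /\ intersects (F u) (F v).

Definition dominating {I : Type} (F : I -> Lframe) (S : I -> Prop) : Prop :=
  forall u, S u \/ exists s, S s /\ G_adj F u s.

Definition cand {I : Type} (F : I -> Lframe) (B Rd : I -> Prop)
  (u b r : I) : Prop :=
  B b /\ Rd r /\ intersects (F b) (F u) /\ intersects (F r) (F u).

(* [pick] realises the choice in the definition of H: for every u, pick u is
   a candidate pair minimising dist (cor b) (cor r). *)
Definition valid_pick {I : Type} (F : I -> Lframe) (B Rd : I -> Prop)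
  (pick : I -> I * I) : Prop :=
  forall u, cand F B Rd u (fst (pick u)) (snd (pick u)) /\
    forall b r, cand F B Rd u b r ->
      dist (cor (F (fst (pick u)))) (cor (F (snd (pick u))))
        <= dist (cor (F b)) (cor (F r)).

Definition arc {I : Type} (pick : I -> I * I) (b r : I) : Prop :=
  exists u, pick u = (b, r).

Definition top_arc {I : Type} (F : I -> Lframe) (pick : I -> I * I)
  (b r : I) : Prop :=
  exists u, pick u = (b, r) /\ int_from_left (F b) (F u) /\
                                int_from_left (F r) (F u).

Definition down_arc {I : Type} (F : I -> Lframe) (pick : I -> I * I)
  (b r : I) : Prop :=
  ~ top_arc F pick b r /\
  exists v, pick v = (b, r) /\ int_from_below (F b) (F v) /\
                                int_from_below (F r) (F v).

Definition mixed_arc {I : Type} (F : I -> Lframe) (pick : I -> I * I)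
  (b r : I) : Prop :=
  arc pick b r /\ ~ top_arc F pick b r /\ ~ down_arc F pick b r.

(* [w] realises the choice of the witness w(b,r) of a mixed arc. *)
Definition valid_mixed_witness {I : Type} (F : I -> Lframe)
  (pick : I -> I * I) (w : I -> I -> I) : Prop :=
  forall b r, mixed_arc F pick b r -> pick (w b r) = (b, r).

Definition on_circle_diam (A B P : point) : Prop :=
  let mx := (fst A + fst B) / 2 in
  let my := (snd A + snd B) / 2 in
  (fst P - mx)^2 + (snd P - my)^2
    = ((fst A - fst B)^2 + (snd A - snd B)^2) / 4.

Definition upper_half (c : R) (A B P : point) : Prop :=
  on_circle_diam A B P /\ fst P + snd P >= c.

Definition lower_half (c : R) (A B P : point) : Prop :=
  on_circle_diam A B P /\ fst P + snd P <= c.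

Definition drawn {I : Type} (c : R) (F : I -> Lframe) (pick : I -> I * I)
  (w : I -> I -> I) (b r : I) (P : point) : Prop :=
  (top_arc F pick b r /\ upper_half c (cor (F b)) (cor (F r)) P) \/
  (down_arc F pick b r /\ lower_half c (cor (F b)) (cor (F r)) P) \/
  (mixed_arc F pick b r /\
     let m := w b r in
     ((cx (F b) < cx (F m) /\
        (upper_half c (cor (F b)) (cor (F m)) P \/
         lower_half c (cor (F m)) (cor (F r)) P)) \/
      (cx (F r) < cx (F m) /\
        (upper_half c (cor (F r)) (cor (F m)) P \/
         lower_half c (cor (F m)) (cor (F b)) P)))).

(* Main.v *)
Require Import Defs.
From Stdlib Require Import Reals Lra List.
Open Scope R_scope.
Section Comb.
Variables (I : Type) (t l h : I -> R) (B Rd : I -> Prop) (pick : I -> I * I).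
Definition LM (u x : I) := t x <= t u /\ t u <= h x /\ l u <= t x.
Definition BM (u x : I) := t u <= t x /\ t x <= h u /\ l x <= t u.
Definition MM u x := LM u x \/ BM u x.
Hypothesis anc : forall i, l i < t i < h i.
Hypothesis tinj : forall i j, t i = t j -> i = j.
Hypothesis disj : forall i, B i -> Rd i -> False.
Hypothesis colp : forall u, B (fst (pick u)) /\ Rd (snd (pick u)).
Hypothesis endM : forall u, MM u (fst (pick u)) /\ MM u (snd (pick u)).
Hypothesis Min : forall u x y, B x -> Rd y -> MM u x -> MM u y ->
  (t (fst (pick u)) - t (snd (pick u)))^2 <= (t x - t y)^2.

Lemma MM_self u : MM u u.
Proof. left; unfold LM; specialize (anc u); lra. Qed.

Lemma uncol w : (t (fst (pick w)) < t w < t (snd (pick w)) \/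
                 t (snd (pick w)) < t w < t (fst (pick w))) -> ~ B w /\ ~ Rd w.
Proof.
  intros H. destruct (colp w) as [Hb Hr]. destruct (endM w) as [Mb Mr].
  split; intro C.
  - pose proof (Min w w (snd (pick w)) C Hr (MM_self w) Mr). destruct H; nra.
  - pose proof (Min w (fst (pick w)) w Hb C Mb (MM_self w)). destruct H; nra.
Qed.

Definition UP (u a bb o : I) :=
  ((a = fst (pick u) /\ o = snd (pick u)) \/ (a = snd (pick u) /\ o = fst (pick u))) /\
  t a < t bb /\ t bb <= t u /\ t bb <= t o /\ LM u a /\ LM u bb /\
  (bb = o \/ (bb = u /\ ~ B u /\ ~ Rd u)).

Lemma opp u a bb o z : UP u a bb o -> (B z \/ Rd z) -> MM u z ->
  (t o - t a)^2 <= (t z - t a)^2 \/ (t o - t a)^2 <= (t z - t o)^2.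
Proof.
  intros [Hao _] Hz Mz. destruct (colp u) as [Hb Hr]. destruct (endM u) as [Mb Mr].
  destruct Hz as [Hz|Hz].
  - pose proof (Min u z (snd (pick u)) Hz Hr Mz Mr).
    destruct Hao as [[-> ->]|[-> ->]]; [right|left]; nra.
  - pose proof (Min u (fst (pick u)) z Hb Hz Mb Mz).
    destruct Hao as [[-> ->]|[-> ->]]; [left|right]; nra.
Qed.

Lemma UP_col u a bb o : UP u a bb o -> (B a \/ Rd a) /\ (B o \/ Rd o).
Proof.
  intros [Hao _]. destruct (colp u) as [Hb Hr].
  destruct Hao as [[-> ->]|[-> ->]]; auto.
Qed.

Lemma cross u1 a1 b1 o1 u2 a2 b2 o2 : UP u1 a1 b1 o1 -> UP u2 a2 b2 o2 ->
  t a1 < t a2 -> t a2 < t b1 -> t b1 < t b2 -> False.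
Proof.
  intros U1 U2 H1 H2 H3.
  pose proof U1 as (Hao1 & lt1 & le1 & lo1 & La1 & Lb1 & Hb1).
  pose proof U2 as (Hao2 & lt2 & le2 & lo2 & La2 & Lb2 & Hb2).
  destruct (Rle_dec (t u1) (t u2)).
  - assert (M : MM u1 a2).
    { left. unfold LM in *. lra. }
    destruct (opp u1 a1 b1 o1 a2 U1 (proj1 (UP_col _ _ _ _ U2)) M); nra.
  - destruct Hb1 as [Hb1 | [Hb1 _]].
    + subst b1. assert (M : MM u2 o1).
      { left. unfold LM in *. lra. }
      destruct (opp u2 a2 b2 o2 o1 U2 (proj2 (UP_col _ _ _ _ U1)) M); nra.
    + subst b1. lra.
Qed.

Lemma eqpiece u1 a b1 o1 u2 b2 o2 : UP u1 a b1 o1 -> UP u2 a b2 o2 -> b1 = b2 ->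
  pick u1 = pick u2.
Proof.
  intros U1 U2 E. subst b2.
  pose proof U1 as (Hao1 & _ & _ & _ & _ & _ & Hb1).
  pose proof U2 as (Hao2 & _ & _ & _ & _ & _ & Hb2).
  pose proof (UP_col _ _ _ _ U1) as [_ C1].
  destruct (colp u1) as [B1 R1]. destruct (colp u2) as [B2 R2].
  destruct Hb1 as [E1 | (E1 & N1 & N1')]; destruct Hb2 as [E2 | (E2 & N2 & N2')].
  - subst. destruct (pick u1) as [x1 y1]; destruct (pick u2) as [x2 y2]; simpl in *.
    destruct Hao1 as [[-> ->]|[-> ->]]; destruct Hao2 as [[? ?]|[? ?]]; subst;
      try reflexivity; exfalso; eauto.
  - subst. destruct C1; contradiction.
  - subst. pose proof (UP_col _ _ _ _ U2) as [_ C2]. destruct C2; contradiction.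
  - subst. reflexivity.
Qed.

Lemma geom a b c d s E : a < b -> c < d -> E > 0 ->
  (s - a) * (s - b) = - E -> (s - c) * (s - d) = - E ->
  (a < c /\ c < b /\ b < d) \/ (c < a /\ a < d /\ d < b) \/ (a = c /\ b = d).
Proof.
  intros. assert (a < s < b) by nra. assert (c < s < d) by nra.
  destruct (Rtotal_order a c) as [Hac|[Hac|Hac]];
  destruct (Rtotal_order b d) as [Hbd|[Hbd|Hbd]].
  - left; lra.
  - exfalso. subst d. nra.
  - exfalso. nra.
  - exfalso. subst c. nra.
  - right; right; lra.
  - exfalso. subst c. nra.
  - exfalso. nra.
  - exfalso. subst d. nra.
  - right; left; lra.
Qed.

Lemma no_cross u1 a1 b1 o1 u2 a2 b2 o2 s E :
  UP u1 a1 b1 o1 -> UP u2 a2 b2 o2 -> pick u1 <> pick u2 -> E > 0 ->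
  (s - t a1) * (s - t b1) = - E -> (s - t a2) * (s - t b2) = - E -> False.
Proof.
  intros U1 U2 N HE E1 E2.
  pose proof U1 as (_ & lt1 & _). pose proof U2 as (_ & lt2 & _).
  destruct (geom _ _ _ _ _ _ lt1 lt2 HE E1 E2) as [H|[H|[Ha Hb]]].
  - eapply (cross u1 a1 b1 o1 u2 a2 b2 o2); tauto.
  - eapply (cross u2 a2 b2 o2 u1 a1 b1 o1); tauto.
  - apply tinj in Ha. apply tinj in Hb. subst. apply N. eapply eqpiece; eauto.
Qed.
End Comb.
Arguments LM {I}. Arguments BM {I}. Arguments MM {I}. Arguments UP {I}.
Section Main.
Variables (c : R) (I : Type) (F : I -> Lframe) (B Rd : I -> Prop)
         (pick : I -> I * I) (w : I -> I -> I).
Hypothesis Hanc : forall i, anchored_above c (F i).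
Hypothesis Hinj : forall i j, cor (F i) = cor (F j) -> i = j.
Hypothesis Hdisj : forall i, B i -> Rd i -> False.
Hypothesis Hvp : valid_pick F B Rd pick.
Hypothesis Hvw : valid_mixed_witness F pick w.

Let t i := cx (F i).
Let ll i := c - vend (F i).
Let hh i := hend (F i).
Let t' i := - t i.
Let ll' i := - hh i.
Let hh' i := - ll i.

Lemma cyE i : cy (F i) = c - t i.
Proof. destruct (Hanc i) as [H _]. unfold onD, cor in H; simpl in H. unfold t; lra. Qed.

Lemma anc i : ll i < t i < hh i.
Proof. destruct (Hanc i) as [H [H1 H2]]. pose proof (cyE i). unfold ll, hh, t in *; lra. Qed.

Lemma anc' i : ll' i < t' i < hh' i.
Proof. pose proof (anc i). unfold ll', t', hh'; lra. Qed.

Lemma tinj i j : t i = t j -> i = j.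
Proof.
  intro E. apply Hinj. unfold cor. rewrite (cyE i), (cyE j). rewrite E.
  unfold t in E. rewrite E. reflexivity.
Qed.

Lemma tinj' i j : t' i = t' j -> i = j.
Proof. unfold t'; intro; apply tinj; lra. Qed.

Lemma inter x u : intersects (F x) (F u) <-> MM t ll hh u x.
Proof.
  pose proof (anc x) as Ax. pose proof (anc u) as Au.
  pose proof (cyE x) as Cx. pose proof (cyE u) as Cu.
  unfold MM, LM, BM, ll, hh, t in *. split.
  - intros [p [Hx Hu]]. unfold onFrame in Hx, Hu.
    rewrite !Rmin_left, !Rmax_right in Hx by lra.
    rewrite !Rmin_left, !Rmax_right in Hu by lra.
    destruct (Rle_dec (cx (F x)) (cx (F u))); [left|right];
    (destruct Hx as [Hx|Hx]; destruct Hu as [Hu|Hu]; repeat split; lra).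
  - intros [H|H].
    + exists (cx (F u), c - cx (F x)). unfold onFrame; simpl.
      rewrite !Rmin_left, !Rmax_right by lra. split; [left|right]; split; lra.
    + exists (cx (F x), c - cx (F u)). unfold onFrame; simpl.
      rewrite !Rmin_left, !Rmax_right by lra. split; [right|left]; split; lra.
Qed.

Lemma MMr u x : MM t' ll' hh' u x <-> MM t ll hh u x.
Proof. unfold MM, LM, BM, t', ll', hh'. split; intros [Hq|Hq]; [right|left|right|left]; lra. Qed.

Lemma LMr u x : LM t' ll' hh' u x <-> BM t ll hh u x.
Proof. unfold LM, BM, t', ll', hh'. split; intros; lra. Qed.

Lemma MM_LM u x : MM t ll hh u x -> t x <= t u -> LM t ll hh u x.
Proof. pose proof (anc x); pose proof (anc u). unfold MM, LM, BM; intros [Hq|Hq] ?; lra. Qed.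

Lemma MM_BM u x : MM t ll hh u x -> t u <= t x -> BM t ll hh u x.
Proof. pose proof (anc x); pose proof (anc u). unfold MM, LM, BM; intros [Hq|Hq] ?; lra. Qed.

Lemma colp u : B (fst (pick u)) /\ Rd (snd (pick u)).
Proof. destruct (Hvp u) as [[H1 [H2 _]] _]. auto. Qed.

Lemma endM u : MM t ll hh u (fst (pick u)) /\ MM t ll hh u (snd (pick u)).
Proof. destruct (Hvp u) as [[_ [_ [H1 H2]]] _]. split; apply inter; auto. Qed.

Lemma endM' u : MM t' ll' hh' u (fst (pick u)) /\ MM t' ll' hh' u (snd (pick u)).
Proof. rewrite !MMr. apply endM. Qed.

Lemma distE i j : Defs.dist (cor (F i)) (cor (F j)) = sqrt (2 * (t i - t j)^2).
Proof. unfold Defs.dist, cor; simpl. rewrite (cyE i), (cyE j). apply f_equal. unfold t. ring. Qed.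

Lemma Min u x y : B x -> Rd y -> MM t ll hh u x -> MM t ll hh u y ->
  (t (fst (pick u)) - t (snd (pick u)))^2 <= (t x - t y)^2.
Proof.
  intros. destruct (Hvp u) as [_ Hq]. specialize (Hq x y).
  assert (Hc : cand F B Rd u x y) by (repeat split; auto; apply inter; auto).
  specialize (Hq Hc). rewrite !distE in Hq. apply sqrt_le_0 in Hq; [lra|apply Rmult_le_pos; [lra|apply pow2_ge_0]..].
Qed.

Lemma Min' u x y : B x -> Rd y -> MM t' ll' hh' u x -> MM t' ll' hh' u y ->
  (t' (fst (pick u)) - t' (snd (pick u)))^2 <= (t' x - t' y)^2.
Proof. rewrite !MMr. intros. unfold t'. assert (Hs : forall p q, (-p - -q)^2 = (p-q)^2) by (intros; ring). rewrite !Hs. apply Min; auto. Qed.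

Definition UPc := UP t ll hh B Rd pick.
Definition UPr := UP t' ll' hh' B Rd pick.

Lemma arc_col b r : arc pick b r -> B b /\ Rd r.
Proof. intros [u Hu]. pose proof (colp u). rewrite Hu in H. auto. Qed.

Lemma mixed_order b r : mixed_arc F pick b r ->
  pick (w b r) = (b, r) /\
  ((t b < t (w b r) < t r) \/ (t r < t (w b r) < t b)).
Proof.
  intros Hm. pose proof (Hvw b r Hm) as Hp. split; auto.
  destruct Hm as (_ & Nt & Nd). set (m := w b r) in *.
  pose proof (endM m) as [Mb Mr]. rewrite Hp in Mb, Mr; simpl in Mb, Mr.
  assert (Ib : intersects (F b) (F m)) by (apply inter; auto).
  assert (Ir : intersects (F r) (F m)) by (apply inter; auto).
  assert (NT : ~ (t b <= t m /\ t r <= t m)).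
  { intros [? ?]. apply Nt. exists m. unfold int_from_left. repeat split; auto. }
  assert (ND : ~ (t b >= t m /\ t r >= t m)).
  { intros [? ?]. apply Nd. split; auto. exists m. unfold int_from_below. repeat split; auto. }
  destruct (Rlt_le_dec (t b) (t m)); destruct (Rlt_le_dec (t r) (t m)).
  - exfalso; apply NT; lra.
  - destruct (Req_dec (t r) (t m)). exfalso; apply NT; lra. left; lra.
  - destruct (Req_dec (t b) (t m)). exfalso; apply NT; lra. right; lra.
  - exfalso; apply ND; lra.
Qed.

Lemma mixed_uncol b r : mixed_arc F pick b r -> ~ B (w b r) /\ ~ Rd (w b r).
Proof.
  intros Hm. destruct (mixed_order b r Hm) as [Hp Ho].
  apply (uncol I t ll hh B Rd pick anc colp endM Min). rewrite Hp; simpl. exact Ho.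
Qed.

Definition EP b r z := z = b \/ z = r \/ (pick z = (b, r) /\ ~ B z /\ ~ Rd z).

Lemma EP_both b1 r1 b2 r2 z : arc pick b1 r1 -> arc pick b2 r2 -> (b1, r1) <> (b2, r2) ->
  EP b1 r1 z -> EP b2 r2 z -> (z = b1 \/ z = r1) /\ (z = b2 \/ z = r2).
Proof.
  intros A1 A2 N E1 E2. apply arc_col in A1. apply arc_col in A2.
  unfold EP in *.
  destruct E1 as [->|[->|(P1 & n1 & n1')]]; destruct E2 as [->|[->|(P2 & n2 & n2')]];
   try tauto.
  exfalso. apply N. rewrite <- P1, <- P2. reflexivity.
Qed.

Definition eP (P : point) := fst P + snd P - c.
Definition sP (P : point) := fst P - eP P / 2.

Lemma circ x y P : on_circle_diam (cor (F x)) (cor (F y)) P ->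
  (sP P - t x) * (sP P - t y) = - (eP P ^ 2 / 4).
Proof.
  unfold on_circle_diam, cor, sP, eP; simpl. rewrite (cyE x), (cyE y).
  destruct P as [u v]; simpl. unfold t. intro H. nra.
Qed.

Ltac ul := unfold t', ll', hh', t, ll, hh in *; lra.

Lemma decomp b r P : arc pick b r -> drawn c F pick w b r P ->
  exists x y, EP b r x /\ EP b r y /\ (sP P - t x) * (sP P - t y) = - (eP P ^ 2 / 4) /\
   ((eP P >= 0 /\ exists u a bb o, UPc u a bb o /\ pick u = (b, r) /\
        ((x = a /\ y = bb) \/ (x = bb /\ y = a))) \/
    (eP P <= 0 /\ exists u a bb o, UPr u a bb o /\ pick u = (b, r) /\
        ((x = a /\ y = bb) \/ (x = bb /\ y = a)))).
Proof.
  intros Ar Hd. pose proof (arc_col b r Ar) as [Bb Rr].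
  assert (Nbr : t b <> t r).
  { intro E. apply tinj in E. subst. eauto. }
  unfold drawn in Hd.
  destruct Hd as [[Ht [Hc He]] | [[Hdn [Hc He]] | [Hm Hx]]].
  - exists b, r. unfold EP. split; [tauto|]. split; [tauto|]. split; [apply circ; auto|].
    left. split; [unfold eP; ul|].
    destruct Ht as (u & Hp & [I1 L1] & [I2 L2]).
    apply inter in I1; apply inter in I2.
    apply MM_LM in I1; [|exact L1]. apply MM_LM in I2; [|exact L2].
    fold t in L1, L2.
    destruct (Rtotal_order (t b) (t r)) as [Hlt|[Heq|Hlt]]; [|exfalso; auto|].
    + exists u, b, r, r. split; [|split; [auto|tauto]].
      unfold UPc, UP. rewrite Hp; simpl. split; [left; auto|]. split; [ul|]. split; [ul|]. split; [ul|]. split; [exact I1|]. split; [exact I2|]. left; reflexivity.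
    + exists u, r, b, b. split; [|split; [auto|tauto]].
      unfold UPc, UP. rewrite Hp; simpl. split; [right; auto|]. split; [ul|]. split; [ul|]. split; [ul|]. split; [exact I2|]. split; [exact I1|]. left; reflexivity.
  - exists b, r. unfold EP. split; [tauto|]. split; [tauto|]. split; [apply circ; auto|].
    right. split; [unfold eP; ul|].
    destruct Hdn as (_ & u & Hp & [I1 L1] & [I2 L2]).
    apply inter in I1; apply inter in I2.
    apply MM_BM in I1; [|ul]. apply MM_BM in I2; [|ul].
    apply LMr in I1. apply LMr in I2. fold t in L1, L2.
    destruct (Rtotal_order (t r) (t b)) as [Hlt|[Heq|Hlt]]; [|exfalso; auto|].
    + exists u, b, r, r. split; [|split; [auto|tauto]].
      unfold UPr, UP. rewrite Hp; simpl. split; [left; auto|]. split; [ul|]. split; [ul|]. split; [ul|]. split; [exact I1|]. split; [exact I2|]. left; reflexivity.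
    + exists u, r, b, b. split; [|split; [auto|tauto]].
      unfold UPr, UP. rewrite Hp; simpl. split; [right; auto|]. split; [ul|]. split; [ul|]. split; [ul|]. split; [exact I2|]. split; [exact I1|]. left; reflexivity.
  - pose proof (mixed_order b r Hm) as [Hp Ho].
    pose proof (mixed_uncol b r Hm) as [Nb Nr].
    cbv zeta in Hx. set (m := w b r) in *.
    assert (EPm : EP b r m) by (unfold EP; tauto).
    assert (EPb : EP b r b) by (unfold EP; tauto).
    assert (EPr : EP b r r) by (unfold EP; tauto).
    pose proof (endM m) as [Mb Mr]. rewrite Hp in Mb, Mr; simpl in Mb, Mr.
    assert (LMm : LM t ll hh m m) by (apply MM_LM; [apply MM_self, anc|ul]).
    assert (LMm' : LM t' ll' hh' m m) by (apply LMr, MM_BM; [apply MM_self, anc|ul]).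
    destruct Hx as [[L [[Hc He]|[Hc He]]] | [L [[Hc He]|[Hc He]]]].
    + assert (Ord : t b < t m < t r) by (destruct Ho; ul).
      exists b, m. repeat split; auto. apply circ; auto. left. split; [unfold eP; ul|].
      exists m, b, m, r. split; [|split; [auto|tauto]].
      apply MM_LM in Mb; [|ul].
      unfold UPc, UP. rewrite Hp; simpl. split; [left; auto|].
      split; [ul|]. split; [ul|]. split; [ul|]. split; [exact Mb|]. split; [exact LMm|].
      right; auto.
    + assert (Ord : t b < t m < t r) by (destruct Ho; ul).
      exists m, r. repeat split; auto. apply circ; auto. right. split; [unfold eP; ul|].
      exists m, r, m, b. split; [|split; [auto|tauto]].
      apply MM_BM, LMr in Mr; [|ul].
      unfold UPr, UP. rewrite Hp; simpl. split; [right; auto|].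
      split; [ul|]. split; [ul|]. split; [ul|]. split; [exact Mr|]. split; [exact LMm'|].
      right; auto.
    + assert (Ord : t r < t m < t b) by (destruct Ho; ul).
      exists r, m. repeat split; auto. apply circ; auto. left. split; [unfold eP; ul|].
      exists m, r, m, b. split; [|split; [auto|tauto]].
      apply MM_LM in Mr; [|ul].
      unfold UPc, UP. rewrite Hp; simpl. split; [right; auto|].
      split; [ul|]. split; [ul|]. split; [ul|]. split; [exact Mr|]. split; [exact LMm|].
      right; auto.
    + assert (Ord : t r < t m < t b) by (destruct Ho; ul).
      exists m, b. repeat split; auto. apply circ; auto. right. split; [unfold eP; ul|].
      exists m, b, m, r. split; [|split; [auto|tauto]].
      apply MM_BM, LMr in Mb; [|ul].
      unfold UPr, UP. rewrite Hp; simpl. split; [left; auto|].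
      split; [ul|]. split; [ul|]. split; [ul|]. split; [exact Mb|]. split; [exact LMm'|].
      right; auto.
Qed.

Lemma final b1 r1 b2 r2 P : arc pick b1 r1 -> arc pick b2 r2 -> (b1, r1) <> (b2, r2) ->
  drawn c F pick w b1 r1 P -> drawn c F pick w b2 r2 P ->
  exists x, (x = b1 \/ x = r1) /\ (x = b2 \/ x = r2) /\ P = cor (F x).
Proof.
  intros A1 A2 N D1 D2.
  destruct (decomp b1 r1 P A1 D1) as (x1 & y1 & Ex1 & Ey1 & C1 & S1).
  destruct (decomp b2 r2 P A2 D2) as (x2 & y2 & Ex2 & Ey2 & C2 & S2).
  destruct (Rtotal_order (eP P) 0) as [Hn|[H0|Hp]].
  - destruct S1 as [[Hs _]|[_ (u1 & a1 & bb1 & o1 & U1 & Pu1 & Or1)]]; [exfalso; lra|].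
    destruct S2 as [[Hs _]|[_ (u2 & a2 & bb2 & o2 & U2 & Pu2 & Or2)]]; [exfalso; lra|].
    exfalso.
    apply (no_cross I t' ll' hh' B Rd pick tinj' Hdisj colp endM' Min'
             u1 a1 bb1 o1 u2 a2 bb2 o2 (- sP P) (eP P ^ 2 / 4) U1 U2).
    + rewrite Pu1, Pu2. exact N.
    + nra.
    + unfold t'. destruct Or1 as [[-> ->]|[-> ->]]; nra.
    + unfold t'. destruct Or2 as [[-> ->]|[-> ->]]; nra.
  - rewrite H0 in C1, C2.
    assert (Z1 : exists z, (z = x1 \/ z = y1) /\ t z = sP P).
    { destruct (Rmult_integral (sP P - t x1) (sP P - t y1)) as [Q|Q]; [lra| |];
      [exists x1|exists y1]; split; auto; lra. }
    assert (Z2 : exists z, (z = x2 \/ z = y2) /\ t z = sP P).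
    { destruct (Rmult_integral (sP P - t x2) (sP P - t y2)) as [Q|Q]; [lra| |];
      [exists x2|exists y2]; split; auto; lra. }
    destruct Z1 as (z1 & Hz1 & T1). destruct Z2 as (z2 & Hz2 & T2).
    assert (z1 = z2) by (apply tinj; congruence). subst z2.
    assert (EP b1 r1 z1) by (destruct Hz1; subst; auto).
    assert (EP b2 r2 z1) by (destruct Hz2; subst; auto).
    destruct (EP_both b1 r1 b2 r2 z1 A1 A2 N) as [Q1 Q2]; auto.
    exists z1. split; auto. split; auto.
    unfold sP, eP in *. destruct P as [u v]; simpl in *. unfold cor.
    rewrite (cyE z1). unfold t in T1. f_equal; unfold t; lra.
  - destruct S1 as [[_ (u1 & a1 & bb1 & o1 & U1 & Pu1 & Or1)]|[Hs _]]; [|exfalso; lra].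
    destruct S2 as [[_ (u2 & a2 & bb2 & o2 & U2 & Pu2 & Or2)]|[Hs _]]; [|exfalso; lra].
    exfalso.
    apply (no_cross I t ll hh B Rd pick tinj Hdisj colp endM Min
             u1 a1 bb1 o1 u2 a2 bb2 o2 (sP P) (eP P ^ 2 / 4) U1 U2).
    + rewrite Pu1, Pu2. exact N.
    + nra.
    + destruct Or1 as [[-> ->]|[-> ->]]; nra.
    + destruct Or2 as [[-> ->]|[-> ->]]; nra.
Qed.
End Main.

Theorem mainTheorem4 :
  forall (c : R) (I : Type) (F : I -> Lframe) (B Rd : I -> Prop)
         (pick : I -> I * I) (w : I -> I -> I),
    (exists l : list I, forall i, In i l) ->
    (forall i, anchored_above c (F i)) ->
    (forall i j, cor (F i) = cor (F j) -> i = j) ->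
    dominating F B -> dominating F Rd ->
    (forall i, B i -> Rd i -> False) ->
    valid_pick F B Rd pick ->
    valid_mixed_witness F pick w ->
    forall b1 r1 b2 r2 (P : point),
      arc pick b1 r1 -> arc pick b2 r2 -> (b1, r1) <> (b2, r2) ->
      drawn c F pick w b1 r1 P -> drawn c F pick w b2 r2 P ->
      exists x, (x = b1 \/ x = r1) /\ (x = b2 \/ x = r2) /\ P = cor (F x).
Proof.
  intros c I F B Rd pick w _ Hanc Hinj _ _ Hdisj Hvp Hvw.
  intros. eapply final; eauto.
Qed.
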